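(* Let $\Gamma\subseteq\mathbf{\Phi}^{\mathbb{R}}_D$ be a weighted relational clone. Then $\mathrm{supp}(\mathrm{wPol}_{\mathbb{R}}(\Gamma))=\mathrm{Pol}(\Gamma)$.
   Context: $D$ is a fixed finite set with $|D|\ge2$; $\overline{\mathbb{R}}=\mathbb{R}\cup\{\infty\}$. An $m$-ary weighted relation is $\gamma:D^m\to\overline{\mathbb{R}}$; $\mathbf{\Phi}^{\mathbb{R}}_D$ is the set of all of them; $\mathrm{Feas}(\gamma)=\{\mathbf{x}:\gamma(\mathbf{x})<\infty\}$; $\mathrm{Opt}(\gamma)$ is the relation that is $0$ on $\{\mathbf{x}\in\mathrm{Feas}(\gamma):\gamma(\mathbf{x})\le\gamma(\mathbf{y})\ \forall\mathbf{y}\}$ and $\infty$ elsewhere. Topology: for each $m$ and $F\subseteq D^m$, the $m$-ary $\gamma$ with $\mathrm{Feas}(\gamma)=F$ are identified with $\mathbb{R}^F$ (Euclidean topology), and $\mathbf{\Phi}^{\mathbb{R}}_D$ has the disjoint union topology. $\phi_=$: binary equality ($0$ if $x=y$, else $\infty$); $\phi_\emptyset$: unary, $\infty$ everywhere. Addition: $\gamma(x_1,\dots,x_r)=\gamma_1(y_1,\dots,y_s)+\gamma_2(z_1,\dots,z_t)$ for a fixed choice of $y_i,z_j$ among the $x$'s; minimisation: $\gamma(x_1,\dots,x_r)=\min_{\mathbf{y}\in D^s}\gamma'(x_1,\dots,x_r,\mathbf{y})$. A weighted relational clone is a set $\Gamma\subseteq\mathbf{\Phi}^{\mathbb{R}}_D$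 containing $\phi_=,\phi_\emptyset$, closed under addition, minimisation, scaling by non-negative reals ($0\cdot\infty=\infty$), addition of real constants and $\mathrm{Opt}$, and topologically closed. A $k$-ary operation is $f:D^k\to D$, applied coordinatewise; $\mathbf{O}^{(k)}_D$ the set of them. $f$ is a polymorphism of $\gamma$ if $f(\mathbf{x}_1,\dots,\mathbf{x}_k)\in\mathrm{Feas}(\gamma)$ whenever all $\mathbf{x}_i\in\mathrm{Feas}(\gamma)$; $\mathrm{Pol}(\Gamma)$ is the set of common polymorphisms. $\mathbf{J}_D$ is the set of projections $e^{(k)}_i(x_1,\dots,x_k)=x_i$. A $k$-ary weighting is $\omega:\mathbf{O}^{(k)}_D\to\mathbb{R}$ with $\sum_f\omega(f)=0$ and $\omega(f)<0$ only if $f$ is a projection; $\mathrm{supp}(\omega)=\mathbf{J}_D^{(k)}\cup\{f:\omega(f)>0\}$; for a set $\Omega$ of weightings, $\mathrm{supp}(\Omega)=\mathbf{J}_D\cup\bigcup_{\omega\in\Omega}\mathrm{supp}(\omega)$. $\omega$ is a weighted polymorphism of $\gamma$ if $\mathrm{supp}(\omega)\subseteq\mathrm{Pol}(\gamma)$ and for all $\mathbf{x}_1,\dots,\mathbf{x}_k\in\mathrm{Feas}(\gamma)$, $\sum_{f\in\mathrm{supp}(\omega)}\omega(f)\gamma(f(\mathbf{x}_1,\dots,\mathbf{x}_k))\le0$; $\mathrm{wPol}_{\mathbb{R}}(\Gamma)$ is the set of weightings that are weighted polymorphisms of all $\gamma\in\Gamma$. *)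

(* Defs.v *)
From mathcomp Require Import all_boot all_order all_algebra.
From Stdlib Require Import Reals.
From mathcomp Require Import Rstruct.
Set Implicit Arguments. Unset Strict Implicit. Unset Printing Implicit Defensive.
Import Order.TTheory GRing.Theory Num.Theory.
Local Open Scope ring_scope.

Section WRC.
Variable D : finType.

(* extended reals  R ∪ {∞}: [Some r] is the real r, [None] is ∞ *)
Definition xR := option R.

Definition tup (m : nat) := {ffun 'I_m -> D}.

Definition wrel_m (m : nat) := tup m -> xR.
Definition wrel := {m : nat & wrel_m m}.
Definition mkw (m : nat) (g : wrel_m m) : wrel := existT _ m g.

Definition feas (m : nat) (g : wrel_m m) (x : tup m) : bool := g x != None.

Definition xadd (a b : xR) : xR :=
  match a, b with Some r, Some s => Some (r + s) | _, _ => None end.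
Definition xmin (a b : xR) : xR :=
  match a, b with
  | Some r, Some s => Some (Num.min r s)
  | None, _ => b
  | _, None => a
  end.
Definition xle (a b : xR) : bool :=
  match a, b with
  | Some r, Some s => r <= s
  | _, None => true
  | None, Some _ => false
  end.

Definition phi_eq : wrel :=
  @mkw 2 (fun x => if x ord0 == x (@Ordinal 2 1 isT) then Some 0 else None).
Definition phi_empty : wrel := @mkw 1 (fun _ => None).

Definition wadd (r s t : nat) (g1 : wrel_m s) (g2 : wrel_m t)
  (sig : 'I_s -> 'I_r) (tau : 'I_t -> 'I_r) : wrel_m r :=
  fun x => xadd (g1 [ffun i => x (sig i)]) (g2 [ffun j => x (tau j)]).

Definition tcat (r s : nat) (x : tup r) (y : tup s) : tup (r + s) :=
  [ffun i : 'I_(r + s) => match fintype.split i with inl j => x j | inr k => y k end].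

Definition wmin (r s : nat) (g : wrel_m (r + s)) : wrel_m r :=
  fun x => \big[xmin/None]_(y : tup s) g (tcat x y).

(* scaling by c >= 0, with 0 * ∞ = ∞ *)
Definition wscale (m : nat) (c : R) (g : wrel_m m) : wrel_m m :=
  fun x => omap (fun v => c * v) (g x).
Definition wconst (m : nat) (c : R) (g : wrel_m m) : wrel_m m :=
  fun x => omap (fun v => v + c) (g x).
Definition wopt (m : nat) (g : wrel_m m) : wrel_m m :=
  fun x => if feas g x && [forall y, xle (g x) (g y)] then Some 0 else None.

(* topological closedness: each set of weighted relations of arity m with
   feasibility set F is identified with R^F (Euclidean topology) and the
   whole space carries the disjoint union topology; so closedness means
   sequential closedness within each component, i.e. closedness under
   coordinatewise limits of sequences with a common feasibility set. *)
Definition top_closed (Gam : wrel -> Prop) : Prop :=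
  forall (m : nat) (gs : nat -> wrel_m m) (g : wrel_m m),
    (forall n, Gam (mkw (gs n))) ->
    (forall n x, feas (gs n) x = feas g x) ->
    (forall x, feas g x ->
       Un_cv (fun n => odflt 0 (gs n x)) (odflt 0 (g x))) ->
    Gam (mkw g).

Definition weighted_relational_clone (Gam : wrel -> Prop) : Prop :=
  [/\ Gam phi_eq, Gam phi_empty,
      (forall (r s t : nat) (g1 : wrel_m s) (g2 : wrel_m t)
              (sig : 'I_s -> 'I_r) (tau : 'I_t -> 'I_r),
          Gam (mkw g1) -> Gam (mkw g2) -> Gam (mkw (wadd g1 g2 sig tau))),
      (forall (r s : nat) (g : wrel_m (r + s)), Gam (mkw g) -> Gam (mkw (wmin g)))
    & [/\ (forall (m : nat) (c : R) (g : wrel_m m), 0 <= c ->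
             Gam (mkw g) -> Gam (mkw (wscale c g))),
          (forall (m : nat) (c : R) (g : wrel_m m),
             Gam (mkw g) -> Gam (mkw (wconst c g))),
          (forall (m : nat) (g : wrel_m m), Gam (mkw g) -> Gam (mkw (wopt g)))
        & top_closed Gam]].

Definition op (k : nat) := {ffun tup k -> D}.
Definition anyop := {k : nat & op k}.

Definition is_proj (k : nat) (f : op k) : bool :=
  [exists i : 'I_k, f == [ffun x : tup k => x i]].

Definition opapp (k m : nat) (f : op k) (xs : 'I_k -> tup m) : tup m :=
  [ffun j => f [ffun i => xs i j]].

Definition is_pol (k m : nat) (f : op k) (g : wrel_m m) : Prop :=
  forall xs : 'I_k -> tup m, (forall i, feas g (xs i)) -> feas g (opapp f xs).

Definition Pol (Gam : wrel -> Prop) (kf : anyop) : Prop :=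
  forall w : wrel, Gam w -> is_pol (projT2 kf) (projT2 w).

Definition weightfun (k : nat) := op k -> R.
Definition is_weighting (k : nat) (om : weightfun k) : Prop :=
  \sum_(f : op k) om f = 0 /\ (forall f : op k, om f < 0 -> is_proj f).
Definition anyweight := {k : nat & weightfun k}.

Definition in_supp (k : nat) (om : weightfun k) (f : op k) : bool :=
  is_proj f || (0 < om f).

Definition is_wpol (k m : nat) (om : weightfun k) (g : wrel_m m) : Prop :=
  (forall f : op k, in_supp om f -> is_pol f g) /\
  forall xs : 'I_k -> tup m, (forall i, feas g (xs i)) ->
    \sum_(f : op k | in_supp om f) om f * odflt 0 (g (opapp f xs)) <= 0.

Definition wPol (Gam : wrel -> Prop) (kw : anyweight) : Prop :=
  is_weighting (projT2 kw) /\
  forall w : wrel, Gam w -> is_wpol (projT2 kw) (projT2 w).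

Definition supp_set (Om : anyweight -> Prop) (kf : anyop) : Prop :=
  is_proj (projT2 kf) \/
  exists om : weightfun (projT1 kf),
    Om (existT _ (projT1 kf) om) /\ in_supp om (projT2 kf).

End WRC.

(* Main.v *)
Require Import Defs.
From mathcomp Require Import all_boot all_order all_algebra.
From Stdlib Require Import Reals.
From mathcomp Require Import Rstruct.
From mathcomp Require Import all_classical all_reals all_analysis.
From mathcomp Require Import Rstruct_topology.
From mathcomp Require Import lra ring.
Set Implicit Arguments. Unset Strict Implicit. Unset Printing Implicit Defensive.
Import Order.TTheory GRing.Theory Num.Theory.
Import numFieldNormedType.Exports.
Local Open Scope ring_scope.
Bind Scope ring_scope with R.

Definition cv (u : nat -> R) (l : R) :=
  forall e : R, 0 < e -> exists N, forall n, leq N n -> `|u n - l| < e.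
Arguments cv u%_function_scope l%_ring_scope.

Lemma cv_ext u v l : (forall n, u n = v n) -> cv u l -> cv v l.
Proof. move=> h c e e0; have [N hN] := c e e0; exists N => n Nn; rewrite -h; exact: hN. Qed.

Lemma cv_const c : cv (fun _ => c) c.
Proof. by move=> e e0; exists 0%N => n _; rewrite subrr normr0. Qed.

Lemma cv_add u v a b : cv u a -> cv v b -> cv (fun n => u n + v n) (a + b).
Proof.
move=> cu cv' e e0.
have e2 : 0 < e / 2 by lra.
have [N1 h1] := cu _ e2; have [N2 h2] := cv' _ e2.
exists (maxn N1 N2) => n Nn.
have := h1 n (leq_trans (leq_maxl _ _) Nn); have := h2 n (leq_trans (leq_maxr _ _) Nn).
move=> A B.
have -> : u n + v n - (a + b) = (u n - a) + (v n - b) by ring.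
apply: (le_lt_trans (ler_normD _ _)); lra.
Qed.

Lemma cv_scale c u a : cv u a -> cv (fun n => c * u n) (c * a).
Proof.
move=> cu e e0.
have c1 : 0 < `|c| + 1 by have := normr_ge0 c; lra.
have e2 : 0 < e / (`|c| + 1) by apply: divr_gt0.
have [N hN] := cu _ e2; exists N => n Nn.
rewrite -mulrBr normrM.
have := hN n Nn; rewrite ltr_pdivlMr // => h.
have h0 := normr_ge0 (u n - a).
have hc := normr_ge0 c.
nra.
Qed.

Lemma cv_unique u a b : cv u a -> cv u b -> a = b.
Proof.
move=> ca cb; apply/eqP; apply/negPn/negP => nab.
have e0 : 0 < `|a - b| / 2 by rewrite divr_gt0 // normr_gt0 subr_eq0.
have [N1 h1] := ca _ e0; have [N2 h2] := cb _ e0.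
have A := h1 _ (leq_maxl N1 N2); have B := h2 _ (leq_maxr N1 N2).
have : `|a - b| <= `|u (maxn N1 N2) - b| + `|u (maxn N1 N2) - a|.
  rewrite (distrC (u _) a).
  have -> : a - b = (a - u (maxn N1 N2)) + (u (maxn N1 N2) - b) by ring.
  by rewrite addrC ler_normD.
lra.
Qed.

Lemma cv_le u v a b : (forall n, u n <= v n) -> cv u a -> cv v b -> a <= b.
Proof.
move=> huv ca cb; rewrite leNgt; apply/negP => ba.
have e0 : 0 < (a - b) / 2 by lra.
have [N1 h1] := ca _ e0; have [N2 h2] := cb _ e0.
have := h1 _ (leq_maxl N1 N2); have := h2 _ (leq_maxr N1 N2).
rewrite !ltr_norml => /andP[_ B] /andP[A _].
have := huv (maxn N1 N2); lra.
Qed.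

Definition inc (f : nat -> nat) := forall n, leq (f n).+1 (f n.+1).

Lemma inc_ge f : inc f -> forall n, leq n (f n).
Proof. move=> hf; elim=> [|n IH] //; exact: leq_ltn_trans IH (hf n). Qed.

Lemma inc_lt f : inc f -> forall m n, leq m.+1 n -> leq (f m).+1 (f n).
Proof.
move=> hf m; elim=> [|n IH] //; rewrite ltnS leq_eqVlt => /orP[/eqP->|lt]; first exact: hf.
exact: ltn_trans (IH lt) (hf n).
Qed.

Lemma inc_comp f g : inc f -> inc g -> inc (f \o g).
Proof. move=> hf hg n; exact: inc_lt hf _ _ (hg n). Qed.

Lemma cv_subseq f u l : inc f -> cv u l -> cv (fun n => u (f n)) l.
Proof.
move=> hf cu e e0; have [N hN] := cu e e0; exists N => n Nn.
apply: hN; exact: leq_trans Nn (inc_ge hf n).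
Qed.

Lemma cv_abs u a : cv u a -> cv (fun n => `|u n|) `|a|.
Proof.
move=> cu e e0; have [N hN] := cu e e0; exists N => n Nn.
exact: le_lt_trans (ler_dist_dist _ _) (hN n Nn).
Qed.

Lemma cv_mul0 u v : cv u 0 -> cv v 0 -> cv (fun n => u n * v n) 0.
Proof.
move=> cu cv' e e0.
have [N1 h1] := cu _ ltr01; have [N2 h2] := cv' _ e0.
exists (maxn N1 N2) => n Nn.
have := h1 n (leq_trans (leq_maxl _ _) Nn); have := h2 n (leq_trans (leq_maxr _ _) Nn).
rewrite !subr0 normrM => B A.
have := normr_ge0 (u n); have := normr_ge0 (v n); nra.
Qed.

Lemma cv_sub0 u a : cv u a -> cv (fun n => u n - a) 0.
Proof. move=> cu e e0; have [N hN] := cu e e0; exists N => n Nn; rewrite subr0; exact: hN. Qed.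

Lemma cv_mul u v a b : cv u a -> cv v b -> cv (fun n => u n * v n) (a * b).
Proof.
move=> cu cv'.
have h := cv_add (cv_add (cv_add (cv_mul0 (cv_sub0 cu) (cv_sub0 cv')) (cv_scale a cv'))
   (cv_scale b cu)) (cv_const (- (a * b))).
have e : 0 + a * b + b * a + - (a * b) = a * b by ring.
rewrite -e; apply: cv_ext h => n /=; ring.
Qed.

Lemma cv_sum (I : eqType) (s : seq I) (F : nat -> I -> R) (L : I -> R) :
  (forall g, g \in s -> cv (fun n => F n g) (L g)) ->
  cv (fun n => \sum_(g <- s) F n g) (\sum_(g <- s) L g).
Proof.
elim: s => [|g s IH] h.
  by apply: cv_ext (cv_const _) => n; rewrite !big_nil.
rewrite big_cons; apply: cv_ext (cv_add (h g (mem_head _ _)) (IH _)).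
  by move=> n; rewrite big_cons.
by move=> g' hg'; apply: h; rewrite in_cons hg' orbT.
Qed.

Lemma cv_bounded u l : cv u l -> exists B, forall n, `|u n| <= B.
Proof.
move=> cu; have [N hN] := cu _ ltr01.
exists (`|l| + 1 + \sum_(i < N) `|u i|) => n.
have s0 : 0 <= \sum_(i < N) `|u i| by apply: sumr_ge0 => i _.
case: (leqP N n) => Nn.
  have := hN n Nn => h.
  have := ler_normD (u n - l) l; rewrite subrK.
  lra.
have : `|u n| <= \sum_(i < N) `|u i|.
  rewrite (bigD1 (Ordinal Nn)) //=.
  have : 0 <= \sum_(i < N | i != Ordinal Nn) `|u i| by apply: sumr_ge0.
  lra.
have := normr_ge0 l; lra.
Qed.

Lemma cv_invn (a : nat -> R) c : (forall j, `|a j| <= c / (j.+1)%:R) -> cv a 0.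
Proof.
move=> ha e e0.
have c0 : 0 <= c by have := ha 0%N; rewrite divr1 => h; exact: le_trans (normr_ge0 _) h.
have ce0 : 0 <= c / e by apply: divr_ge0 => //; exact: ltW.
exists (Num.Def.archi_bound (c / e)) => n Nn.
rewrite subr0; apply: (le_lt_trans (ha n)).
have hb := archi_boundP ce0.
have hn : (Num.Def.archi_bound (c / e))%:R <= n%:R :> R by rewrite ler_nat.
have hn1 : 0 < (n.+1)%:R :> R by rewrite ltr0n.
rewrite ltr_pdivrMr //.
have : c / e < (n.+1)%:R by rewrite -addn1 natrD; lra.
rewrite ltr_pdivrMr // => h; lra.
Qed.

Lemma BW1 (u : nat -> R) (B : R) : (forall n, `|u n| <= B) ->
  exists f : nat -> nat, inc f /\ exists l, cv (fun n => u (f n)) l.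
Proof.
move=> hB.
have [|f fi fc] := @bolzano_weierstrass R u.
  rewrite /bounded_near; near=> M => t At /=.
  apply: (le_trans (hB t)). by near: M; exact: (nbhs_pinfty_ge (num_real B)).
exists f; split; first by move=> n; apply/(increasing_seqP f).2.
move/cvg_ex: fc => [l /cvgrPdistC_lt hl].
exists l => e e0; have := hl e e0.
case => N _ hN; exists N => n Nn; exact: (hN n Nn).
Unshelve. all: end_near. Qed.

Lemma BWm (I : finType) (x : nat -> I -> R) (B : R) : (forall n g, `|x n g| <= B) ->
  exists f, inc f /\ exists L : I -> R, forall g, cv (fun n => x (f n) g) (L g).
Proof.
move=> hB.
suff : forall s : seq I, exists f, inc f /\ exists L : I -> R,
    forall g, g \in s -> cv (fun n => x (f n) g) (L g).
  by case/(_ (enum I)) => f [fi [L hL]]; exists f; split => //; exists L => g; apply: hL; rewrite mem_enum.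
elim=> [|g s [f [fi [L hL]]]].
  by exists (fun n : nat => n); split => [n //|]; exists (fun _ => 0) => g.
have [h [hi [l hl]]] := BW1 (fun n => hB (f n) g).
exists (f \o h); split; first exact: inc_comp.
exists (fun g' => if g' == g then l else L g') => g'; rewrite in_cons.
case: eqP => [-> _ //|_ /= hg].
exact: cv_subseq hi (hL g' hg).
Qed.

Section Cone.
Variable I : finType.
Definition dot (u v : I -> R) := \sum_g u g * v g.
Definition nsq (u : I -> R) := dot u u.

Lemma nsq_ge0 u : 0 <= nsq u.
Proof. by apply: sumr_ge0 => g _; rewrite -expr2 sqr_ge0. Qed.

Lemma term_le_nsq u g : u g * u g <= nsq u.
Proof.
rewrite /nsq /dot (bigD1 g) //=.
have : 0 <= \sum_(h | h != g) u h * u h by apply: sumr_ge0 => h _; rewrite -expr2 sqr_ge0.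
lra.
Qed.

Lemma nsq_pos u g : u g != 0 -> 0 < nsq u.
Proof.
move=> ug; rewrite /nsq /dot (bigD1 g) //=.
have : 0 <= \sum_(h | h != g) u h * u h by apply: sumr_ge0 => h _; rewrite -expr2 sqr_ge0.
have : 0 < u g * u g by rewrite -expr2 exprn_even_gt0.
lra.
Qed.

Lemma nsq_ext u v : (forall g, u g = v g) -> nsq u = nsq v.
Proof. by move=> h; apply: eq_bigr => g _; rewrite h. Qed.

Lemma nsq_expand (a b : I -> R) t :
  nsq (fun g => a g - t * b g) = nsq a - 2 * t * dot a b + t ^+ 2 * nsq b.
Proof.
rewrite /nsq /dot !mulr_sumr -sumrB -big_split /=; apply: eq_bigr => g _; ring.
Qed.

Lemma cv_nsq (x : nat -> I -> R) L :
  (forall g, cv (fun n => x n g) (L g)) -> cv (fun n => nsq (x n)) (nsq L).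
Proof.
move=> h; apply: (@cv_sum _ (index_enum I) (fun n g => x n g * x n g) (fun g => L g * L g)).
by move=> g _; apply: cv_mul.
Qed.

Lemma cv_rsub c u a : cv u a -> cv (fun n => c - u n) (c - a).
Proof.
move=> h; have h' := cv_add (cv_const c) (cv_scale (-1) h).
have e : c + -1 * a = c - a by ring.
rewrite e in h'; apply: cv_ext h' => n /=; ring.
Qed.


Section Sep.
Variable C : (I -> R) -> Prop.
Variables Pp Jp : I -> Prop.
Variable f0 : I.
Hypothesis hadd : forall u v, C u -> C v -> C (fun g => u g + v g).
Hypothesis hscale : forall c u, 0 <= c -> C u -> C (fun g => c * u g).
Hypothesis hzero : C (fun _ => 0).
Hypothesis hclosed : forall (x : nat -> I -> R) L, (forall n, C (x n)) ->
  (forall g, cv (fun n => x n g) (L g)) -> C L.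
Hypothesis hkey : forall v, C v -> (forall g, Pp g -> 0 <= v g) ->
  (forall g, Jp g -> v g = 0) -> forall g, Pp g -> v g = 0.
Hypothesis hJP : forall g, Jp g -> Pp g.
Hypothesis hPf : Pp f0.
Hypothesis hJf : ~ Jp f0.

Let Q g := Pp g /\ ~ Jp g.
Let K (w : I -> R) := exists v, C v /\ forall g, (Q g -> w g <= v g) /\ (~ Q g -> w g = v g).

Lemma K_C v : C v -> K v.
Proof. by move=> hv; exists v; split => // g; split => // _. Qed.

Lemma K_add u v : K u -> K v -> K (fun g => u g + v g).
Proof.
move=> [u' [hu hu']] [v' [hv hv']]; exists (fun g => u' g + v' g); split; first exact: hadd.
move=> g; have [a b] := hu' g; have [c d] := hv' g; split.
  by move=> q; have := a q; have := c q; lra.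
by move=> q; rewrite (b q) (d q).
Qed.

Lemma K_scale c u : 0 <= c -> K u -> K (fun g => c * u g).
Proof.
move=> c0 [u' [hu hu']]; exists (fun g => c * u' g); split; first exact: hscale.
move=> g; have [a b] := hu' g; split.
  by move=> q; apply: ler_wpM2l => //; exact: a.
by move=> q; rewrite (b q).
Qed.

Lemma K_ext u v : K u -> (forall g, v g = u g) -> K v.
Proof. by move=> [u' [hu hu']] e; exists u'; split => // g; rewrite e; exact: hu'. Qed.

Lemma K_closed (w : nat -> I -> R) L : (forall n, K (w n)) ->
  (forall g, cv (fun n => w n g) (L g)) -> K L.
Proof.
move=> hK hL.
have [v hv] := choice hK.
case: (pselect (exists B, forall n g, `|v n g| <= B)) => [[B hB]|hnB].
  have [f [fi [V hV]]] := BWm hB.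
  exists V; split; first by apply: (hclosed (x := fun n => v (f n))) => // n; exact: (hv (f n)).1.
  move=> g; split => q.
    apply: (cv_le _ (cv_subseq fi (hL g)) (hV g)) => n.
    exact: ((hv (f n)).2 g).1 q.
  apply: (cv_unique (cv_subseq fi (hL g))).
  by apply: cv_ext (hV g) => n; rewrite ((hv (f n)).2 g).2.
exfalso.
have hj : forall j : nat, exists ng : nat * I, (j.+1)%:R < `|v ng.1 ng.2|.
  move=> j; apply/not_existsP => hc; apply: hnB; exists (j.+1)%:R => n g.
  by have /negP := hc (n, g); rewrite -leNgt.
have [ng hng] := choice hj.
pose M j := \sum_g `|v (ng j).1 g|.
have vM : forall j g, `|v (ng j).1 g| <= M j.
  move=> j g; rewrite /M (bigD1 g) //=.
  have : 0 <= \sum_(h | h != g) `|v (ng j).1 h| by apply: sumr_ge0.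
  lra.
have Mgt : forall j, (j.+1)%:R < M j.
  by move=> j; exact: lt_le_trans (hng j) (vM _ _).
have Mpos : forall j, 0 < M j.
  by move=> j; apply: lt_trans (Mgt j); rewrite ltr0n.
have Mi0 : forall j, 0 <= (M j)^-1 by move=> j; rewrite invr_ge0; exact: ltW.
pose u j g := (M j)^-1 * v (ng j).1 g.
have Cu : forall j, C (u j).
  by move=> j; apply: hscale; [exact: Mi0 | exact: (hv _).1].
have ub : forall j g, `|u j g| <= 1.
  move=> j g; rewrite /u normrM (ger0_norm (Mi0 j)).
  apply: (le_trans (ler_wpM2l (Mi0 j) (vM j g))).
  by rewrite mulVf // gt_eqF.
have [h [hi [U hU]]] := BWm ub.
have CU : C U by apply: (hclosed (x := fun j => u (h j))).
have sum1 : forall j, \sum_g `|u j g| = 1.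
  move=> j; rewrite /u.
  under eq_bigr => g _ do rewrite normrM (ger0_norm (Mi0 j)).
  by rewrite -mulr_sumr mulVf // gt_eqF.
have hw0 : forall g, cv (fun j => (M (h j))^-1 * w (ng (h j)).1 g) 0.
  move=> g; have [Bg hBg] := cv_bounded (hL g).
  have Bg0 : 0 <= Bg by exact: le_trans (normr_ge0 _) (hBg 0%N).
  apply: (@cv_invn _ Bg) => j.
  rewrite normrM (ger0_norm (Mi0 _)) mulrC.
  have Mj : (j.+1)%:R <= M (h j).
    apply: ltW; apply: le_lt_trans (Mgt (h j)); rewrite ler_nat ltnS; exact: inc_ge hi j.
  have j0 : 0 < (j.+1)%:R :> R by rewrite ltr0n.
  apply: le_trans (_ : Bg * (M (h j))^-1 <= _).
    by apply: ler_wpM2r; [exact: Mi0 | exact: hBg].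
  apply: ler_wpM2l => //.
  by rewrite lef_pV2 ?posrE.
have U0 : forall g, U g = 0.
  have hQ : forall g, Q g -> 0 <= U g.
    move=> g q; apply: (cv_le _ (hw0 g) (hU g)) => j.
    rewrite /u; apply: ler_wpM2l; first exact: Mi0.
    exact: ((hv _).2 g).1 q.
  have hnQ : forall g, ~ Q g -> U g = 0.
    move=> g q; apply: (cv_unique (hU g)); apply: cv_ext (hw0 g) => j.
    by rewrite /u ((hv _).2 g).2.
  have hP : forall g, Pp g -> U g = 0.
    move=> g0 pg0; apply: (hkey CU _ _ pg0).
      move=> g pg; case: (pselect (Jp g)) => jg; first by rewrite hnQ // => -[_ /(_ jg)].
      by apply: hQ.
    by move=> g jg; apply: hnQ => -[_ /(_ jg)].
  move=> g; case: (pselect (Pp g)) => pg; first exact: hP.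
  by apply: hnQ => -[/pg].
have c1 : cv (fun j => \sum_g `|u (h j) g|) (\sum_g `|U g|).
  apply: (@cv_sum _ (index_enum I) (fun j g => `|u (h j) g|) (fun g => `|U g|)) => g _.
  exact: cv_abs.
have := cv_unique c1 (cv_ext (fun j => esym (sum1 (h j))) (cv_const 1)).
under eq_bigr => g _ do rewrite U0 normr0.
by rewrite big1 // => /eqP; rewrite eq_sym oner_eq0.
Qed.


Lemma K0 : K (fun _ => 0).
Proof. exact: K_C. Qed.

Let p : I -> R := fun g => if g == f0 then 1 else 0.

Lemma notKp : ~ K p.
Proof.
move=> [v [Cv hv]].
have p0 : forall g, 0 <= p g by move=> g; rewrite /p; case: eqP.
have vP : forall g, Pp g -> 0 <= v g.
  move=> g pg; have [a b] := hv g.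
  case: (pselect (Q g)) => q; first exact: le_trans (p0 g) (a q).
  by rewrite -(b q).
have vJ : forall g, Jp g -> v g = 0.
  move=> g jg; have [_ b] := hv g.
  rewrite -b; last by case.
  by rewrite /p; case: eqP => // e; rewrite e in jg.
have := hkey Cv vP vJ hPf.
have [a _] := hv f0.
have := a (conj hPf hJf); rewrite /p eqxx => h e; rewrite e in h; lra.
Qed.

Lemma separation : exists w : I -> R, (forall v, C v -> dot w v <= 0) /\
  (forall g, Pp g -> ~ Jp g -> 0 <= w g) /\ 0 < w f0.
Proof.
pose dist w := nsq (fun g => p g - w g).
pose E : set R := fun r => exists w, K w /\ r = - dist w.
have hsE : has_sup E.
  split; first by exists (- dist (fun _ => 0)); exists (fun _ => 0); split => //; exact: K0.
  by exists 0 => r [w [_ ->]]; rewrite oppr_le0 nsq_ge0.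
pose d := - sup E.
have hlow : forall w, K w -> d <= dist w.
  move=> w kw; have Ew : E (- dist w) by exists w.
  have := ub_le_sup hsE.2 Ew; rewrite /d; lra.
have happ : forall e, 0 < e -> exists w, K w /\ dist w < d + e.
  move=> e e0; have [r [w [kw ->]] hr] := sup_adherent e0 hsE.
  by exists w; split => //; rewrite /d; lra.
have hseq : forall n : nat, exists w, K w /\ dist w < d + (n.+1)%:R^-1.
  by move=> n; apply: happ; rewrite invr_gt0 ltr0n.
have [ws hws] := choice hseq.
have hbd : forall n g, `|ws n g| <= d + 3.
  move=> n g.
  have h1 : (p g - ws n g) * (p g - ws n g) <= dist (ws n) :=
    term_le_nsq (fun g => p g - ws n g) g.
  have h2 : dist (ws n) < d + 1.
    apply: lt_le_trans (hws n).2 _; rewrite lerD2l invf_le1 ?ltr0n // ler1n //.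
  have h3 : `|p g - ws n g| <= (p g - ws n g) * (p g - ws n g) + 1.
    have e : `|p g - ws n g| * `|p g - ws n g| = (p g - ws n g) * (p g - ws n g).
      by rewrite -normrM ger0_norm // -expr2 sqr_ge0.
    have := normr_ge0 (p g - ws n g); nra.
  have hp : `|p g| <= 1 by rewrite /p; case: eqP; rewrite ?normr1 ?normr0.
  have := ler_normB (p g) (p g - ws n g).
  rewrite (_ : p g - (p g - ws n g) = ws n g); last by ring.
  lra.
have [phi [phii [q hq]]] := BWm hbd.
have kq : K q by apply: (K_closed (w := fun n => ws (phi n))) => // n; exact: (hws _).1.
have dq : dist q <= d.
  have c1 : cv (fun n => dist (ws (phi n))) (dist q).
    exact: (cv_nsq (x := fun n g => p g - ws (phi n) g) (fun g => cv_rsub (p g) (hq g))).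
  have c2 : cv (fun n => d + (n.+1)%:R^-1) d.
    have := cv_add (cv_const d) (@cv_invn (fun n => (n.+1)%:R^-1) 1 _).
    rewrite addr0; apply.
    by move=> j; rewrite div1r ger0_norm // invr_ge0 ler0n.
  apply: (cv_le _ c1 c2) => n.
  apply: ltW; apply: lt_le_trans (hws (phi n)).2 _.
  rewrite lerD2l lef_pV2 ?posrE ?ltr0n // ler_nat ltnS; exact: inc_ge.
have hmin : forall w, K w -> dist q <= dist w by move=> w kw; exact: le_trans dq (hlow w kw).
pose om := fun g => p g - q g.
have hi : forall w, K w -> dot om w <= 0.
  move=> w kw; rewrite leNgt; apply/negP => a0.
  have s0 := nsq_ge0 w.
  pose t := dot om w / (nsq w + 1).
  have t0 : 0 < t by apply: divr_gt0 => //; lra.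
  have ht : t * (nsq w + 1) = dot om w by rewrite /t divfK // gt_eqF //; lra.
  have kt : K (fun g => q g + t * w g) := K_add kq (K_scale (ltW t0) kw).
  have := hmin _ kt.
  have -> : dist (fun g => q g + t * w g) = nsq (fun g => om g - t * w g).
    by apply: nsq_ext => g; rewrite /om; ring.
  rewrite nsq_expand -/(nsq om).
  have hts : t * nsq w = dot om w - t by rewrite -ht; ring.
  have e : t ^+ 2 * nsq w = t * (dot om w - t) by rewrite -hts; ring.
  rewrite e => h.
  have := mulr_gt0 t0 a0; have := mulr_gt0 t0 t0.
  have : dist q = nsq om by [].
  nra.
have hii : 0 <= dot om q.
  rewrite leNgt; apply/negP => b0.
  have s0 := nsq_ge0 q.
  pose b := - dot om q.
  have bp : 0 < b by rewrite /b oppr_gt0.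
  pose t := b / (nsq q + b + 1).
  have t0 : 0 < t by apply: divr_gt0 => //; lra.
  have ht : t * (nsq q + b + 1) = b by rewrite /t divfK // gt_eqF //; lra.
  have t1 : t <= 1.
    have : t * b + t * nsq q + t = b by rewrite -[RHS]ht; ring.
    have := mulr_ge0 (ltW t0) s0; have := mulr_gt0 t0 bp; nra.
  have kt : K (fun g => (1 - t) * q g) by apply: K_scale => //; lra.
  have := hmin _ kt.
  have -> : dist (fun g => (1 - t) * q g) = nsq (fun g => om g - (- t) * q g).
    by apply: nsq_ext => g; rewrite /om; ring.
  rewrite nsq_expand -/(nsq om).
  have e1 : dot om q = - b by rewrite /b opprK.
  have hts : t * nsq q = b - t * b - t.
    have : t * nsq q + t * b + t = b by rewrite -[RHS]ht; ring.
    lra.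
  have e : (- t) ^+ 2 * nsq q = t * (b - t * b - t) by rewrite -hts; ring.
  rewrite e e1 => h.
  have := mulr_gt0 t0 bp; have := mulr_gt0 t0 t0; have := mulr_gt0 (mulr_gt0 t0 t0) bp.
  have : dist q = nsq om by [].
  nra.
have hnz : exists g, om g != 0.
  apply/not_existsP => hc; apply: notKp; apply: (K_ext kq) => g.
  have := hc g; rewrite /om => /negP; rewrite negbK subr_eq0 => /eqP ->; done.
have npos : 0 < nsq om by case: hnz => g; exact: nsq_pos.
have dp : dot om p = om f0.
  rewrite /dot (bigD1 f0) //= big1 => [|g /negbTE gf]; last by rewrite /p gf mulr0.
  by rewrite /p eqxx mulr1 addr0.
have dp2 : dot om p = nsq om + dot om q.
  rewrite /nsq /dot -big_split; apply: eq_bigr => g _ /=; rewrite /om; ring.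
exists om; split; first by move=> v cv'; apply: hi; exact: K_C.
split; last by rewrite -dp dp2; lra.
move=> g pg jg.
pose e := fun h => - (if h == g then 1 else 0 : R).
have ke : K e.
  exists (fun _ => 0); split => // h; split => [_|nq]; rewrite /e; first by case: eqP => _; lra.
  by case: eqP => [eh|]; [exfalso; apply: nq; rewrite eh | rewrite oppr0].
have := hi _ ke.
rewrite /dot (bigD1 g) //= big1 => [|h /negbTE hg]; last by rewrite /e hg oppr0 mulr0.
rewrite /e eqxx addr0; lra.
Qed.

End Sep.
End Cone.

Definition rz : R := 0.

Lemma xadd_feas (a b : xR) : (xadd a b != None) = (a != None) && (b != None).
Proof. by case: a; case: b. Qed.

Lemma cv_Un u l : cv u l -> Un_cv u l.
Proof.
move=> c e he.
have e0 : 0 < e by apply/RltP.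
have [N hN] := c e e0; exists N => m hm.
apply/RltP; apply: hN; exact/ssrnat.leP.
Qed.

Section Gam.
Variable D : finType.
Variable Gam : wrel D -> Prop.
Hypothesis hG : weighted_relational_clone Gam.
Variable k : nat.
Variable d : D.

Let nn := #|tup D k|.

Definition tab (g : op D k) : tup D nn := [ffun j => g (enum_val j)].
Definition untab (y : tup D nn) : op D k := [ffun t => y (enum_rank t)].

Lemma tabK g : untab (tab g) = g.
Proof. by apply/ffunP => t; rewrite !ffunE enum_rankK. Qed.

Lemma untabK y : tab (untab y) = y.
Proof. by apply/ffunP => j; rewrite !ffunE enum_valK. Qed.

Definition prj (i : 'I_k) : op D k := [ffun x : tup D k => x i].
Definition Xp (i : 'I_k) : tup D nn := tab (prj i).

Lemma opapp_X g : opapp g Xp = tab g.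
Proof.
apply/ffunP => j; rewrite !ffunE; congr (g _); apply/ffunP => i.
by rewrite !ffunE.
Qed.

Lemma prj_pol i m (ga : wrel_m D m) : is_pol (prj i) ga.
Proof.
move=> xs hxs; have -> : opapp (prj i) xs = xs i by apply/ffunP => j; rewrite !ffunE.
exact: hxs.
Qed.

Lemma proj_prj g : is_proj g -> exists i, g = prj i.
Proof. by case/existsP => i /eqP ->; exists i. Qed.

Definition Pp (g : op D k) : Prop := Pol Gam (existT _ k g).

Lemma ffun_id m (y : tup D m) : [ffun i => y i] = y.
Proof. by apply/ffunP => i; rewrite ffunE. Qed.

Lemma minor m (ga : wrel_m D m) (xs : 'I_k -> tup D m) : Gam (mkw ga) ->
  exists ga' : wrel_m D nn, Gam (mkw ga') /\ forall g, ga' (tab g) = ga (opapp g xs).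
Proof.
case: hG => _ _ hadd _ [hsc _ _ _] hga.
pose sig (j : 'I_m) : 'I_nn := enum_rank [ffun i => xs i j].
exists (wadd ga (wscale rz ga) sig sig); split.
  apply: hadd => //; apply: hsc => //; exact: lexx.
move=> g; rewrite /wadd /wscale.
have -> : [ffun j => tab g (sig j)] = opapp g xs.
  by apply/ffunP => j; rewrite !ffunE enum_rankK.
by case: (ga (opapp g xs)) => //= r; rewrite /rz mul0r addr0.
Qed.

Lemma base : exists rho : wrel_m D nn, Gam (mkw rho) /\ forall g, feas rho (tab g).
Proof.
have heq : Gam (phi_eq D) by case: hG.
pose xs (i : 'I_k) : tup D 2 := [ffun _ => d].
have [ga' [hga' e]] := minor (ga := projT2 (phi_eq D)) xs heq.
exists ga'; split => // g; rewrite /feas e.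
have h : forall j, opapp g xs j = g [ffun _ => d].
  by move=> j; rewrite ffunE; congr (g _); apply/ffunP => i; rewrite !ffunE.
by rewrite /= !h eqxx.
Qed.

Lemma rho_ex : exists rho : wrel_m D nn, Gam (mkw rho) /\
  (forall g, Pp g -> rho (tab g) = Some 0) /\ (forall g, ~ Pp g -> rho (tab g) = None).
Proof.
have hs : forall s : seq (op D k), exists rho : wrel_m D nn, Gam (mkw rho) /\
    (forall g, Pp g -> feas rho (tab g)) /\ (forall g, g \in s -> ~ Pp g -> ~~ feas rho (tab g)).
  elim=> [|g s [rho [hr [h1 h2]]]].
    by have [rho [hr h]] := base; exists rho; split => //; split => // g _.
  case: (pselect (Pp g)) => pg.
    exists rho; split => //; split => // g'; rewrite in_cons => /orP[/eqP -> //|].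
    exact: h2.
  have [w [hw nw]] : exists w, Gam w /\ ~ is_pol g (projT2 w).
    apply: contrapT => hc; apply: pg => w hw; apply: contrapT => nw; apply: hc; by exists w.
  case: w hw nw => m ga /= hw nw.
  have [xs [hxs nxs]] : exists xs, (forall i, feas ga (xs i)) /\ ~~ feas ga (opapp g xs).
    apply: contrapT => hc; apply: nw => xs hxs; apply: contrapT => nf; apply: hc; exists xs; split => //.
    exact/negP.
  have [ga' [hga' e]] := minor xs hw.
  case: hG => _ _ hadd _ _.
  exists (wadd rho ga' (fun i => i) (fun i => i)); split; first exact: hadd.
  split.
    move=> h ph; rewrite /feas /wadd ffun_id xadd_feas; apply/andP; split; first exact: h1.
    by rewrite e; apply: (ph (mkw ga)).
  move=> g'; rewrite in_cons => /orP[/eqP -> _|g's npg'].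
    by rewrite /feas /wadd ffun_id xadd_feas e negb_and; apply/orP; right.
  by rewrite /feas /wadd ffun_id xadd_feas negb_and; apply/orP; left; exact: h2.
have [rho [hr [h1 h2]]] := hs (enum (op D k)).
case: hG => _ _ _ _ [hsc _ _ _].
exists (wscale rz rho); split; first by apply: hsc => //; exact: lexx.
split.
  move=> g pg; have := h1 g pg; rewrite /feas /wscale.
  by case: (rho (tab g)) => //= r _; rewrite /rz mul0r.
move=> g npg; have := h2 g (mem_enum _ g) npg; rewrite /feas /wscale.
by case: (rho (tab g)).
Qed.

Definition Cset (v : op D k -> R) : Prop := exists ga : wrel_m D nn, Gam (mkw ga) /\
  (forall g, Pp g -> ga (tab g) = Some (v g)) /\ (forall g, ~ Pp g -> ga (tab g) = None /\ v g = 0).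

Lemma C_add u v : Cset u -> Cset v -> Cset (fun g => u g + v g).
Proof.
move=> [g1 [h1 [a1 b1]]] [g2 [h2 [a2 b2]]].
case: hG => _ _ hadd _ _.
exists (wadd g1 g2 (fun i => i) (fun i => i)); split; first exact: hadd.
split=> g; rewrite /wadd ffun_id.
  by move=> pg; rewrite a1 // a2.
move=> npg; have [-> ->] := b1 g npg; have [_ ->] := b2 g npg.
by rewrite addr0.
Qed.

Lemma C_scale c u : 0 <= c -> Cset u -> Cset (fun g => c * u g).
Proof.
move=> c0 [ga [hg [a b]]].
case: hG => _ _ _ _ [hsc _ _ _].
exists (wscale c ga); split; first exact: hsc.
split=> g; rewrite /wscale.
  by move=> pg; rewrite a.
by move=> npg; have [-> ->] := b g npg; rewrite mulr0.
Qed.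

Lemma C_zero : Cset (fun _ => 0).
Proof.
have [rho [hr [a b]]] := rho_ex.
by exists rho; split => //; split => // g npg; rewrite b.
Qed.

Lemma C_const (c : R) : Cset (fun g => if `[< Pp g >] then c else 0).
Proof.
have [rho [hr [a b]]] := rho_ex.
case: hG => _ _ _ _ [_ hcst _ _].
exists (wconst c rho); split; first exact: hcst.
split=> g; rewrite /wconst.
  by move=> pg; rewrite a //= (asboolT pg) add0r.
by move=> npg; rewrite b // (asboolF npg).
Qed.

Lemma C_closed (x : nat -> op D k -> R) L : (forall n, Cset (x n)) ->
  (forall g, cv (fun n => x n g) (L g)) -> Cset L.
Proof.
move=> hx hL.
have [gs hgs] := choice hx.
case: hG => _ _ _ _ [_ _ _ htop].
pose ga (y : tup D nn) : xR := if `[< Pp (untab y) >] then Some (L (untab y)) else None.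
have hga : Gam (mkw ga).
  apply: (htop nn gs ga).
  - by move=> n; exact: (hgs n).1.
  - move=> n y; rewrite -(untabK y) /feas /ga tabK.
    case: (pselect (Pp (untab y))) => p.
      by rewrite (asboolT p) ((hgs n).2.1 _ p).
    by rewrite (asboolF p) (((hgs n).2.2 _ p).1).
  - move=> y; rewrite -(untabK y) /feas /ga tabK.
    case: (pselect (Pp (untab y))) => p; last by rewrite (asboolF p).
    rewrite (asboolT p) => _ /=.
    apply: cv_Un; apply: cv_ext (hL (untab y)) => n.
    by rewrite ((hgs n).2.1 _ p).
exists ga; split => //; split=> g; rewrite /ga tabK.
  by move=> pg; rewrite (asboolT pg).
move=> npg; rewrite (asboolF npg); split => //.
apply: (cv_unique (hL g)); apply: cv_ext (cv_const 0) => n.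
by rewrite (((hgs n).2.2 _ npg).2).
Qed.

Lemma C_key (i0 : 'I_k) v : Cset v -> (forall g, Pp g -> 0 <= v g) ->
  (forall g, is_proj g -> v g = 0) -> forall g, Pp g -> v g = 0.
Proof.
move=> [ga [hg [a b]]] vP vJ g pg.
case: hG => _ _ _ _ [_ _ hopt _].
have hX : forall i, ga (Xp i) = Some 0.
  move=> i; rewrite /Xp a; last by move=> w _; exact: prj_pol.
  by rewrite vJ // /is_proj; apply/existsP; exists i.
have hall : forall y, xle (Some 0) (ga y).
  move=> y; rewrite -(untabK y).
  case: (pselect (Pp (untab y))) => p; first by rewrite a //= vP.
  by rewrite ((b _ p).1).
have hXf : forall i, feas (wopt ga) (Xp i).
  move=> i; rewrite /feas /wopt hX /=.
  have -> : [forall y, xle (Some 0) (ga y)] by apply/forallP.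
  by rewrite /feas hX.
have := pg (mkw (wopt ga)) (hopt _ _ hg) Xp hXf.
rewrite opapp_X /feas /wopt /=.
case: ifP => [/andP[_ /forallP h] _|_]; last by [].
have := h (Xp i0); rewrite hX a //= => h1.
apply/eqP; rewrite eq_le h1 vP //.
Qed.


Lemma hard (f : op D k) : Pp f -> ~~ is_proj f ->
  exists om : weightfun D k, wPol Gam (existT _ k om) /\ in_supp om f.
Proof.
move=> pf npf.
have hemp : Gam (phi_empty D) by case: hG.
have k0 : leq 1 k.
  rewrite lt0n; apply/eqP => k0.
  have h := pf (phi_empty D) hemp (fun _ => [ffun _ => d]).
  have : feas (projT2 (phi_empty D)) (opapp f (fun _ => [ffun _ => d])).
    apply: h => i; exfalso; move: (nat_of_ord i) (ltn_ord i : leq (nat_of_ord i).+1 k) => j; by rewrite k0.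
  by [].
pose i0 : 'I_k := Ordinal k0.
have [w [hw1 [hw2 hw3]]] := @separation (op D k) Cset Pp (fun g => is_proj g) f
  C_add C_scale C_zero C_closed (C_key i0) pf (negP npf).
pose om : weightfun D k := fun g => if `[< Pp g >] then w g else 0.
have s1 := hw1 _ (C_const 1); have s2 := hw1 _ (C_const (-1)).
have e2 : dot w (fun g => if `[< Pp g >] then -1 else 0) =
    - dot w (fun g => if `[< Pp g >] then 1 else 0).
  rewrite /dot -sumrN; apply: eq_bigr => g _; case: `[< Pp g >]; ring.
have e1 : \sum_g om g = dot w (fun g => if `[< Pp g >] then 1 else 0).
  by apply: eq_bigr => g _; rewrite /om; case: `[< Pp g >]; rewrite ?mulr1 ?mulr0.
have sum0 : \sum_g om g = 0 by rewrite e1; rewrite e2 in s2; lra.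
have hwt : is_weighting om.
  split => // g; rewrite /om; case: (pselect (Pp g)) => p; last by rewrite (asboolF p) ltxx.
  rewrite (asboolT p) => wl; case: (boolP (is_proj g)) => // nj.
  by have := hw2 g p (negP nj); rewrite leNgt wl.
exists om; split; last by rewrite /in_supp /om (asboolT pf) hw3 orbT.
split => // -[m ga] hga /=.
split.
  move=> g /orP[pj|]; first by have [i ->] := proj_prj pj; exact: prj_pol.
  rewrite /om; case: (pselect (Pp g)) => p; last by rewrite (asboolF p) ltxx.
  by move=> _; exact: (p (mkw ga) hga).
move=> xs hxs.
have [ga' [hga' e']] := minor xs hga.
have [rho [hr [ra rb]]] := rho_ex.
pose v g := if `[< Pp g >] then odflt 0 (ga (opapp g xs)) else 0.
have Cv : Cset v.
  case: hG => _ _ hadd _ _.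
  exists (wadd ga' rho (fun i => i) (fun i => i)); split; first exact: hadd.
  split=> g; rewrite /wadd ffun_id e'.
    move=> pg; rewrite ra // /v (asboolT pg).
    have := pg (mkw ga) hga xs hxs; rewrite /feas /=.
    by case: (ga (opapp g xs)) => //= r _; rewrite addr0.
  move=> npg; rewrite rb // /v (asboolF npg); split => //.
  by case: (ga (opapp g xs)).
have := hw1 _ Cv.
rewrite /dot => hle; rewrite big_mkcond /=.
suff -> : \sum_g (if in_supp om g then om g * odflt 0 (ga (opapp g xs)) else 0) =
    \sum_g w g * v g by [].
apply: eq_bigr => g _; rewrite /om /v.
case: (pselect (Pp g)) => p; last by rewrite (asboolF p) mulr0 mul0r; case: ifP.
rewrite (asboolT p); case: ifP => // hs.
have w0 : w g = 0.
  move: hs; rewrite /in_supp /om (asboolT p) => /norP[nj nl].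
  have := hw2 g p (negP nj); rewrite le_eqVlt (negbTE nl) orbF => /eqP <-.
  by [].
by rewrite w0 mul0r.
Qed.

End Gam.

Local Close Scope ring_scope.

Theorem corollary1 (D : finType) (hD : 1 < #|D|) (Gam : wrel D -> Prop) :
  weighted_relational_clone Gam ->
  forall kf : anyop D, supp_set (wPol Gam) kf <-> Pol Gam kf.
Proof.
move=> hG [k f]; split.
  case => [pj|[om [[_ hom] hs]]] w hw /=.
    by move: pj => /= /proj_prj [i ->]; exact: prj_pol.
  exact: ((hom w hw).1 f hs).
move=> pf; case: (boolP (is_proj f)) => pj; first by left.
right.
have : leq 1 #|D| by apply: ltn_trans hD.
case/card_gt0P => d _.
have [om [h1 h2]] := hard hG d pf pj.
by exists om.
Qed.
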